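(* Let $\alpha,\beta\ge 1$ be real numbers and let $w$ be a random variable with the Beta distribution with parameters $\alpha,\beta$, i.e. with density proportional to $x^{\alpha-1}(1-x)^{\beta-1}$ on $[0,1]$. Let $\mu=\alpha/(\alpha+\beta)$ be the mean of $w$. Then $\mathbb{E}[\min(\mu,w)]\ge \mu(1-1/e)$. *)

(* Defs.v *)
From HB Require Import structures.
From mathcomp Require Import all_boot all_order all_algebra.
From mathcomp Require Import all_classical all_reals all_analysis.
Set Implicit Arguments. Unset Strict Implicit. Unset Printing Implicit Defensive.
Import Order.TTheory GRing.Theory Num.Theory.
Import numFieldNormedType.Exports.
Local Open Scope classical_set_scope.
Local Open Scope ring_scope.

(* The library's beta distribution
   (beta_distribution.v) only allows natural-number parameters, so we define
   the Beta(a,b) law for real parameters a, b directly. *)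

Definition beta_kernel {R : realType} (a b : R) (x : R) : R :=
  (x `^ (a - 1)) * ((1 - x) `^ (b - 1)).

Definition beta_const {R : realType} (a b : R) : R :=
  \int[lebesgue_measure]_(x in `[0%R, 1%R]) beta_kernel a b x.

Definition beta_density {R : realType} (a b : R) (x : R) : R :=
  beta_kernel a b x / beta_const a b.

Definition beta_expect {R : realType} (a b : R) (f : R -> R) : \bar R :=
  (\int[lebesgue_measure]_(x in `[0%R, 1%R]) (f x * beta_density a b x)%:E)%E.

(* Main.v *)
Require Import Defs.
From HB Require Import structures.
From mathcomp Require Import all_boot all_order all_algebra.
From mathcomp Require Import all_classical all_reals all_analysis.
From mathcomp Require Import ring lra.
Import Order.TTheory GRing.Theory Num.Theory.
Import numFieldNormedType.Exports.
Local Open Scope classical_set_scope.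
Local Open Scope ring_scope.

Section S.
Context {R : realType}.
Definition pw (p x : R) := (Num.max x 0) `^ p.

Lemma pw_derive (p x : R) : 0 < x -> is_derive x 1 (pw p) (p * x `^ (p - 1)).
Proof.
move=> x0; have H := is_derive1_powR p x0.
apply: (near_eq_is_derive _ H).
near=> y; rewrite /pw max_l//; apply/ltW; near: y; exact: lt_nbhsr.
Unshelve. all: by end_near. Qed.

Lemma pw_cont (p x : R) : 0 <= p -> {for x, continuous (pw p)}.
Proof.
move=> p0.
have [->|pn0] := eqVneq p 0.
  have -> : pw 0 = cst 1 by apply/funext => y; rewrite /pw powRr0.
  exact: cst_continuous.
have [x0|x0|->] := ltgtP x 0.
- apply: differentiable_continuous; apply/derivable1_diffP.
  have : is_derive x 1 (pw p) 0.
    have H : is_derive x 1 (cst (0 `^ p) : R -> R) 0 by exact: is_derive_cst.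
    apply: (near_eq_is_derive _ H).
    near=> y; rewrite /pw max_r//; apply/ltW; near: y; exact: lt_nbhsl.
  by case.
- apply: differentiable_continuous; apply/derivable1_diffP.
  by have [] := @pw_derive p x x0.
- apply/left_right_continuousP; split.
  + apply: cvg_near_cst.
    near=> y.
    have y0 : y <= 0 by near: y; exact: nbhs_left_le.
    by rewrite /pw !max_r.
  + rewrite {2}/pw max_r// powR0//.
    apply: (@cvg_trans _ ((fun a => a `^ p) @ 0^'+)); last by apply: powR_cvg0; rewrite lt_def pn0 p0.
    apply: near_eq_cvg; near=> y.
    have y0 : 0 < y by near: y; exact: nbhs_right_gt.
    by rewrite /pw max_l// ltW.
Unshelve. all: by end_near. Qed.

Notation mu := (@lebesgue_measure R).
Definition Prim (f : R -> R) (x : R) : R := \int[mu]_(t in `[-1, x]) f t.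

Lemma cont_integrable (f : R -> R) (a b : R) : continuous f ->
  mu.-integrable `[a, b] (EFin \o f).
Proof.
move=> cf; apply: continuous_compact_integrable; first exact: segment_compact.
exact: continuous_subspaceT.
Qed.

Lemma Prim_derive (f : R -> R) (x : R) : continuous f -> -1 < x ->
  is_derive x 1 (Prim f) (f x).
Proof.
move=> cf x1.
have xx : x < x + 1 by rewrite ltrDl.
have [d fd] := continuous_FTC1_closed xx (cont_integrable f (-1) (x+1) cf) x1 (cf x).
rewrite -fd derive1E; exact: derivableP.
Qed.

Lemma Prim_cont (f : R -> R) (x : R) : continuous f -> -1 < x ->
  {for x, continuous (Prim f)}.
Proof.
move=> cf x1; apply: differentiable_continuous; apply/derivable1_diffP.
by have [] := Prim_derive f x cf x1.
Qed.

Lemma ftc01 (f : R -> R) : continuous f ->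
  (\int[mu]_(x in `[0%R, 1%R]) (f x)%:E = (Prim f 1 - Prim f 0)%:E)%E.
Proof.
move=> cf; rewrite EFinB; apply: continuous_FTC2 ltr01 _ _ _.
- exact: continuous_subspaceT.
- split.
  + move=> x; rewrite in_itv/= => /andP[x0 _].
    have x1 : -1 < x by lra.
    by have [] := Prim_derive f x cf x1.
  + by apply: cvg_at_right_filter; apply: Prim_cont => //; lra.
  + by apply: cvg_at_left_filter; apply: Prim_cont.
- move=> x; rewrite in_itv/= => /andP[x0 _].
  have x1 : -1 < x by lra.
  by rewrite derive1E; have [_ ->] := Prim_derive f x cf x1.
Qed.

Lemma mono (f df : R -> R) (a b : R) : a <= b ->
  (forall x, a < x < b -> is_derive x 1 f (df x)) ->
  (forall x, a <= x <= b -> {for x, continuous f}) ->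
  (forall x, a < x < b -> 0 <= df x) -> f a <= f b.
Proof.
rewrite le_eqVlt => /predU1P[->//|ab] fd fc dpos.
have fd' : forall x, x \in `]a, b[ -> is_derive x 1 f (df x).
  by move=> x; rewrite in_itv => /fd.
have fc' : {within `[a, b], continuous f}.
  by apply: continuous_in_subspaceT => x; rewrite inE/= in_itv => /fc.
have [c cab e] := MVT ab fd' fc'.
by rewrite -subr_ge0 e mulr_ge0 ?subr_ge0 ?(ltW ab)// dpos//; move: cab; rewrite in_itv.
Qed.

Lemma der_cont (f : R -> R) (x df : R) : is_derive x 1 f df -> {for x, continuous f}.
Proof. by case=> d _; apply: differentiable_continuous; apply/derivable1_diffP. Qed.

Lemma oneminus_derive (x : R) : is_derive x 1 (fun y : R => 1 - y) (-1).
Proof.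
have := @is_deriveB R R R (cst 1) id x 1 0 1 (is_derive_cst _ _ _) (is_derive_id _ _).
by rewrite sub0r.
Qed.

Lemma pw1_cont (p x : R) : 0 <= p -> {for x, continuous (fun y : R => pw p (1 - y))}.
Proof.
move=> p0; apply: (@continuous_comp _ _ _ (fun y : R => 1 - y) (pw p)).
  exact: der_cont (oneminus_derive x).
exact: pw_cont.
Qed.

Lemma pw_id (p x : R) : 0 <= x -> pw p x = x `^ p.
Proof. by move=> x0; rewrite /pw max_l. Qed.

Lemma pw1_derive (p x : R) : x < 1 ->
  is_derive x 1 (fun y : R => pw p (1 - y)) (- (p * (1 - x) `^ (p - 1))).
Proof.
move=> x1.
have h1 := oneminus_derive x.
have h2 : is_derive (1 - x) 1 (pw p) (p * (1 - x) `^ (p - 1)).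
  by apply: pw_derive; rewrite subr_gt0.
have := @is_derive1_comp R (pw p) (fun y : R => 1 - y) x _ _ h2 h1.
by rewrite mulrN1.
Qed.
Lemma lin_derive (L c u : R) : is_derive u 1 (fun v : R => L * v + c) L.
Proof.
have h := @is_deriveZ R R R id L u 1 1 (is_derive_id _ _).
have h2 := @is_deriveD R R R _ (cst c) u 1 _ 0 h (is_derive_cst _ _ _).
have -> : (fun v : R => L * v + c) = L \*: id + cst c by apply/funext.
by move: h2; rewrite addr0 /GRing.scale /= mulr1.
Qed.

Lemma expl_derive (L c u : R) :
  is_derive u 1 (fun v : R => expR (L * v + c)) (expR (L * u + c) * L).
Proof.
have := @is_derive1_comp R expR (fun v : R => L * v + c) u _ _ (is_derive_expR _) (lin_derive L c u).
done.
Qed.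

Lemma monoN (f df : R -> R) (a b : R) : a <= b ->
  (forall x, a < x < b -> is_derive x 1 f (df x)) ->
  (forall x, a <= x <= b -> {for x, continuous f}) ->
  (forall x, a < x < b -> df x <= 0) -> f b <= f a.
Proof.
move=> ab fd fc dn; rewrite -lerN2.
apply: (@mono (fun x => - f x) (fun x => - df x)) => //.
- by move=> x xi; apply: is_deriveN; exact: fd.
- by move=> x xi; apply: continuousN; exact: fc.
- by move=> x xi; rewrite oppr_ge0; exact: dn.
Qed.

End S.

Section Main.
Context {R : realType}.
Variables (a b : R).
Hypotheses (ha : 1 <= a) (hb : 1 <= b).

Definition kh (x : R) := pw (a - 1) x * pw (b - 1) (1 - x).

Let a1 : 0 <= a - 1. Proof. by rewrite subr_ge0. Qed.
Let b1 : 0 <= b - 1. Proof. by rewrite subr_ge0. Qed.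

Lemma kh_cont (x : R) : {for x, continuous kh}.
Proof.
apply: (continuousM (s:=pw (a - 1)) (t:=fun y : R => pw (b - 1) (1 - y))).
  exact: pw_cont.
exact: pw1_cont.
Qed.

Lemma khc : continuous kh. Proof. by move=> x; exact: kh_cont. Qed.

Lemma kh_ge0 (x : R) : 0 <= kh x.
Proof. by rewrite mulr_ge0 // powR_ge0. Qed.

Lemma kh_E (x : R) : 0 <= x <= 1 -> kh x = x `^ (a - 1) * (1 - x) `^ (b - 1).
Proof. by move=> /andP[x0 x1]; rewrite /kh !pw_id// subr_ge0. Qed.

Lemma kh_gt0 (x : R) : 0 < x < 1 -> 0 < kh x.
Proof.
move=> /andP[x0 x1]; rewrite kh_E ?ltW ?x0 ?x1//.
by rewrite mulr_gt0// powR_gt0// subr_gt0.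
Qed.

Definition P := Prim kh.

Lemma P_derive (x : R) : -1 < x -> is_derive x 1 P (kh x).
Proof. by move=> x1; apply: Prim_derive => //; exact: khc. Qed.

Lemma P_cont (x : R) : -1 < x -> {for x, continuous P}.
Proof. by move=> x1; apply: Prim_cont => //; exact: khc. Qed.

Lemma P_mono (x y : R) : -1 < x -> x <= y -> P x <= P y.
Proof.
move=> x1 xy; apply: (@mono R P kh) => //.
- move=> z /andP[xz _]; apply: P_derive; exact: lt_trans xz.
- move=> z /andP[xz _]; apply: P_cont; exact: lt_le_trans xz.
- by move=> z _; exact: kh_ge0.
Qed.

Definition phi (x : R) := P 1 - P x.

Lemma phi_gt0 (t : R) : 0 <= t < 1 -> 0 < phi t.
Proof.
move=> /andP[t0 t1].
have fd : forall x, x \in `]t, 1[ -> is_derive x 1 P (kh x).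
  move=> x; rewrite in_itv/= => /andP[tx _]; apply: P_derive; lra.
have fc : {within `[t, 1], continuous P}.
  apply: continuous_in_subspaceT => x; rewrite inE/= in_itv/= => /andP[tx _].
  apply: P_cont; lra.
have [c cab e] := MVT t1 fd fc.
rewrite /phi e mulr_gt0 ?subr_gt0//; apply: kh_gt0.
by move: cab; rewrite in_itv/= => /andP[tc ->]; rewrite andbT (le_lt_trans t0).
Qed.

Lemma kprod (x y s : R) : 0 <= x -> x <= y -> 0 <= s -> y + s <= 1 ->
  kh x * kh (y + s) <= kh y * kh (x + s).
Proof.
move=> x0 xy s0 ys1.
have y0 : 0 <= y by exact: le_trans xy.
rewrite !kh_E; try (apply/andP; split; lra).
rewrite mulrACA [X in _ <= X]mulrACA -!powRM; try lra.
apply: ler_pM; try exact: powR_ge0.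
  apply: ge0_ler_powR => //; rewrite ?nnegrE; nra.
apply: ge0_ler_powR => //; rewrite ?nnegrE; nra.
Qed.


Lemma Pshift_derive (c s : R) : -1 < c + s ->
  is_derive s 1 (fun u : R => P (c + u)) (kh (c + s)).
Proof.
move=> h.
have h1 : is_derive s 1 (fun u : R => c + u) 1.
  have := @is_deriveD R R R (cst c) id s 1 0 1 (is_derive_cst _ _ _) (is_derive_id _ _).
  by rewrite add0r.
have := @is_derive1_comp R P (fun u : R => c + u) s _ _ (P_derive (c + s) h) h1.
by rewrite mulr1.
Qed.

Lemma haz (x y : R) : 0 <= x -> x <= y -> y <= 1 -> kh x * phi y <= kh y * phi x.
Proof.
move=> x0 xy y1.
pose T s := kh y * (P (x + s) - P x) - kh x * (P (y + s) - P y).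
pose dT s := kh y * kh (x + s) - kh x * kh (y + s).
have y0 : 0 <= y by exact: le_trans xy.
have hT : T 0 <= T (1 - y).
  apply: (@mono R T dT); first lra.
  - move=> s /andP[s0 s1].
    have d1 := Pshift_derive x s ltac:(lra).
    have d2 := Pshift_derive y s ltac:(lra).
    have e1 := @is_deriveB R R R _ (cst (P x)) s 1 _ 0 d1 (is_derive_cst _ _ _).
    have e2 := @is_deriveB R R R _ (cst (P y)) s 1 _ 0 d2 (is_derive_cst _ _ _).
    have f1 := @is_deriveZ R R R _ (kh y) s 1 _ e1.
    have f2 := @is_deriveZ R R R _ (kh x) s 1 _ e2.
    have g := @is_deriveB R R R _ _ s 1 _ _ f1 f2.
    have -> : T = (kh y \*: ((fun u : R => P (x + u)) - cst (P x)) -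
       kh x \*: ((fun u : R => P (y + u)) - cst (P y))) by apply/funext.
    have -> : dT s = kh y *: (kh (x + s) - 0) - kh x *: (kh (y + s) - 0).
      by rewrite /dT !subr0.
    exact: g.
  - move=> s /andP[s0 s1].
    apply: continuousB; apply: continuousM; try exact: cst_continuous.
      apply: continuousB; last exact: cst_continuous.
      apply: der_cont; apply: Pshift_derive; lra.
    apply: continuousB; last exact: cst_continuous.
    apply: der_cont; apply: Pshift_derive; lra.
  - move=> s /andP[s0 s1]; rewrite /dT subr_ge0.
    apply: kprod; lra.
move: hT; rewrite /T !addr0 !subrr !mulr0 subrr.
have -> : y + (1 - y) = 1 by ring.
rewrite subr_ge0 /phi => h; apply: (le_trans h); apply: ler_wpM2l; first exact: kh_ge0.
apply: lerB => //; apply: P_mono; lra.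
Qed.

Lemma phi_derive (u : R) : -1 < u -> is_derive u 1 phi (- kh u).
Proof.
move=> u1.
have := @is_deriveB R R R (cst (P 1)) P u 1 0 _ (is_derive_cst _ _ _) (P_derive u u1).
by rewrite sub0r.
Qed.

Lemma phi_cont (u : R) : -1 < u -> {for u, continuous phi}.
Proof. by move=> u1; apply: der_cont (phi_derive u u1). Qed.

Lemma g_derive (L u : R) : -1 < u ->
  is_derive u 1 (fun v => phi v * expR (L * v + 0))
    (expR (L * u + 0) * (L * phi u - kh u)).
Proof.
move=> u1.
have h := is_deriveM (phi_derive u u1) (expl_derive L 0 u).
have -> : (fun v => phi v * expR (L * v + 0)) = phi * (fun v => expR (L * v + 0)) by [].
apply: (is_derive_eq h).
rewrite /GRing.scale/=; ring.
Qed.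

Lemma tan (t s : R) : 0 < t < 1 -> 0 <= s <= 1 ->
  phi s * expR (kh t / phi t * s) <= phi t * expR (kh t / phi t * t).
Proof.
move=> /andP[t0 t1] /andP[s0 s1].
have pt : 0 < phi t by apply: phi_gt0; rewrite t1 ltW.
set L := kh t / phi t.
pose g v := phi v * expR (L * v + 0).
have -> : phi s * expR (L * s) = g s by rewrite /g addr0.
have -> : phi t * expR (L * t) = g t by rewrite /g addr0.
have gc : forall u, 0 <= u -> {for u, continuous g}.
  move=> u u0; apply: der_cont (g_derive L u _); lra.
have [st|ts] := leP s t.
- apply: (@mono R g (fun u => expR (L * u + 0) * (L * phi u - kh u))) => //.
  + move=> u ui; apply: g_derive; lra.
  + move=> u ui; apply: gc; lra.
  + move=> u /andP[su ut]; apply: mulr_ge0; first exact: expR_ge0.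
    rewrite subr_ge0 /L mulrAC ler_pdivlMr//.
    apply: haz; lra.
- apply: (@monoN R g (fun u => expR (L * u + 0) * (L * phi u - kh u))); first lra.
  + move=> u ui; apply: g_derive; lra.
  + move=> u ui; apply: gc; lra.
  + move=> u /andP[su ut]; apply: mulr_ge0_le0; first exact: expR_ge0.
    rewrite subr_le0 /L mulrAC ler_pdivrMr//.
    apply: haz; lra.
Qed.

Definition xk (x : R) := x * kh x.
Lemma xkc : continuous xk.
Proof. move=> x; apply: continuousM; [exact: der_cont (is_derive_id x 1)|exact: khc]. Qed.
Definition Q := Prim xk.

Definition Gh (x : R) := pw a x * pw b (1 - x).

Lemma Gh_derive (x : R) : 0 < x < 1 -> is_derive x 1 Gh ((a - (a + b) * x) * kh x).
Proof.
move=> /andP[x0 x1].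
have h := is_deriveM (pw_derive a x x0) (pw1_derive b x x1).
have -> : Gh = pw a * (fun y => pw b (1 - y)) by [].
apply: (is_derive_eq h).
rewrite /GRing.scale/= kh_E ?(ltW x0) ?(ltW x1)// !pw_id ?(ltW x0)// ?subr_ge0 ?(ltW x1)//.
have xa : x `^ a = x * x `^ (a - 1).
  rewrite mulr_powRB1 //; [exact: ltW | exact: lt_le_trans ltr01 ha].
have xb : (1 - x) `^ b = (1 - x) * (1 - x) `^ (b - 1).
  rewrite mulr_powRB1 //; [rewrite subr_ge0; exact: ltW | exact: lt_le_trans ltr01 hb].
rewrite xa xb; ring.
Qed.

Lemma mean : a * (P 1 - P 0) <= (a + b) * (Q 1 - Q 0).
Proof.
pose W x := (a + b) * Q x + Gh x - a * P x.
have h : W 0 <= W 1.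
  apply: (@mono R W (fun=> 0)); first lra.
  - move=> x /andP[x0 x1].
    have x1' : -1 < x by lra.
    have hQ := Prim_derive xk x xkc x1'.
    have h1 := is_deriveZ (a + b) hQ.
    have h2 := is_deriveD h1 (Gh_derive x ltac:(lra)).
    have h3 := is_deriveB h2 (is_deriveZ a (P_derive x x1')).
    have -> : W = ((a + b) \*: Q + Gh - a \*: P) by [].
    apply: (is_derive_eq h3).
    rewrite /GRing.scale/= /xk; ring.
  - move=> x /andP[x0 x1].
    have x1' : -1 < x by lra.
    apply: continuousB; last first.
      by apply: continuousM; [exact: cst_continuous|exact: P_cont].
    apply: continuousD.
      apply: continuousM; first exact: cst_continuous.
      exact: Prim_cont xkc x1'.
    apply: continuousM; [apply: pw_cont|apply: pw1_cont]; apply: le_trans ler01 _; done.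
  - by [].
move: h; rewrite /W /Gh subrr subr0.
have an : a != 0 by rewrite gt_eqF // (lt_le_trans ltr01 ha).
have bn : b != 0 by rewrite gt_eqF // (lt_le_trans ltr01 hb).
rewrite !pw_id ?ler01 ?lexx // powR0 // powR0 // !mul0r !mulr0 !addr0 => h.
rewrite mulrBr mulrBr; lra.
Qed.

Definition mu := a / (a + b).
Let ab0 : 0 < a + b. Proof. have := lt_le_trans ltr01 ha; have := lt_le_trans ltr01 hb. lra. Qed.
Lemma mu_gt0 : 0 < mu. Proof. by rewrite divr_gt0 // (lt_le_trans ltr01 ha). Qed.
Lemma mu_lt1 : mu < 1.
Proof. rewrite /mu ltr_pdivrMr // mul1r; have := lt_le_trans ltr01 hb; lra. Qed.

Definition K (x : R) := Q x - Q 0 + x * phi x.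

Lemma K_derive (x : R) : -1 < x -> is_derive x 1 K (phi x).
Proof.
move=> x1.
have hQ := Prim_derive xk x xkc x1.
have h1 := is_deriveB hQ (is_derive_cst (Q 0) x 1).
have h2 := is_deriveM (is_derive_id x 1) (phi_derive x x1).
have h3 := is_deriveD h1 h2.
have -> : K = (Q - cst (Q 0)) + id * phi by [].
apply: (is_derive_eq h3).
rewrite /GRing.scale/= /xk; ring.
Qed.

Lemma K_cont (x : R) : -1 < x -> {for x, continuous K}.
Proof. by move=> x1; exact: der_cont (K_derive x x1). Qed.

Lemma B_gt0 : 0 < phi 0. Proof. by apply: phi_gt0; rewrite lexx ltr01. Qed.

Lemma phi_le (x : R) : 0 <= x -> phi x <= phi 0.
Proof. by move=> x0; rewrite /phi lerB // P_mono // ltrN10. Qed.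

Lemma phi1 : phi 1 = 0. Proof. by rewrite /phi subrr. Qed.

Lemma claimA : phi 0 * expR (-1) <= phi mu.
Proof.
have m0 := mu_gt0; have m1 := mu_lt1.
set B := phi 0.
have B0 : 0 < B := B_gt0.
have pm : 0 < phi mu by apply: phi_gt0; rewrite ltW // m1.
set c := kh mu / phi mu.
have c0 : 0 < c by rewrite divr_gt0 // kh_gt0 // m0 m1.
set A := phi mu / B.
have A0 : 0 < A by rewrite divr_gt0.
have A1 : A <= 1 by rewrite ler_pdivrMr // mul1r phi_le // ltW.
have tan0 := tan mu 0 ltac:(lra) ltac:(lra).
rewrite mulr0 expR0 mulr1 -/c -/B in tan0.
set t0 := mu + ln A / c.
have lnA : ln A <= 0 by rewrite ln_le0.
have t0mu : t0 <= mu by rewrite /t0 gerDl pmulr_lle0 // invr_gt0.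
have t00 : 0 <= t0.
  have : 1 <= A * expR (c * mu) by rewrite /A mulrAC ler_pdivlMr // mul1r.
  rewrite -[A]lnK ?posrE // -expRD -expR0 ler_expR => h.
  rewrite /t0 -(@ler_pM2r _ c) // mul0r mulrDl divfK ?gt_eqF // mulrC.
  lra.
have s1 : K t0 - B * t0 <= K 0 - B * 0.
  apply: (@monoN R (fun x => K x - B * x) (fun x => phi x - B)) => //.
  - move=> x /andP[x0 _].
    have h := is_deriveB (K_derive x ltac:(lra)) (is_deriveZ B (is_derive_id x 1)).
    have -> : (fun x => K x - B * x) = K - B \*: id by [].
    by apply: (is_derive_eq h); rewrite /GRing.scale/= mulr1.
  - move=> x /andP[x0 _]; apply: continuousB; first by apply: K_cont; lra.
    by apply: continuousM; [exact: cst_continuous|exact: der_cont (is_derive_id x 1)].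
  - by move=> x /andP[x0 _]; rewrite subr_le0 phi_le // ltW.
have K0 : K 0 = 0 by rewrite /K subrr mul0r addr0.
rewrite K0 mulr0 subr0 in s1.
pose V x := (B - phi mu * expR (- c * x + c * mu)) / c.
have s2 : K 1 - V 1 <= K t0 - V t0.
  apply: (@monoN R (fun x => K x - V x) (fun x => phi x - phi mu * expR (- c * x + c * mu))).
  - lra.
  - move=> x /andP[x0 _].
    have he := expl_derive (- c) (c * mu) x.
    have hv := is_deriveZ (c^-1) (is_deriveB (is_derive_cst B x 1) (is_deriveZ (phi mu) he)).
    have h := is_deriveB (K_derive x ltac:(lra)) hv.
    have -> : (fun x => K x - V x) = K - c^-1 \*: (cst B - phi mu \*: (fun v => expR (- c * v + c * mu))).
      by apply/funext => v; rewrite /V /= mulrC.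
    apply: (is_derive_eq h); rewrite /GRing.scale/=.
    by field; rewrite gt_eqF.
  - move=> x /andP[x0 _]; apply: continuousB; first by apply: K_cont; lra.
    exact: der_cont (is_derive_eq _ _).
  - move=> x /andP[x0 x1]; rewrite subr_le0.
    have := tan mu x ltac:(lra) ltac:(lra).
    rewrite -/c => h.
    rewrite -ler_pdivlMr ?expR_gt0 // in h.
    by rewrite (le_trans h) // -mulrA -expRN -expRD mulNr addrC.
have Vt0 : V t0 = 0.
  rewrite /V /t0.
  have -> : - c * (mu + ln A / c) + c * mu = - ln A by field; rewrite gt_eqF.
  rewrite expRN lnK ?posrE // /A invf_div.
  have -> : phi mu * (B / phi mu) = B by field; rewrite gt_eqF.
  by rewrite subrr mul0r.
have V1 : V 1 <= B / c.
  rewrite /V ler_pM2r ?invr_gt0 // gerBl mulr_ge0 // ?expR_ge0 // ltW //.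
have K1 : K 1 = Q 1 - Q 0 by rewrite /K phi1 mulr0 addr0.
rewrite Vt0 subr0 K1 in s2.
have hm := mean.
have hmu : mu * B <= Q 1 - Q 0.
  rewrite /mu mulrAC ler_pdivrMr // mulrC.
  by rewrite -/B /B /phi in hm *; lra.
have key : 0 <= B * (ln A + 1) / c.
  have h1 : mu * B <= B * t0 + B / c by lra.
  have e : B * t0 = mu * B + B * (ln A / c) by rewrite /t0 mulrDr [B * mu]mulrC.
  have -> : B * (ln A + 1) / c = B * (ln A / c) + B / c.
    by field; rewrite gt_eqF.
  lra.
have lnA1 : -1 <= ln A.
  move: key; rewrite -mulrA pmulr_rge0 // pmulr_lge0 ?invr_gt0 //; lra.
have : expR (-1) <= A by rewrite -[A]lnK ?posrE // ler_expR.
by rewrite /A ler_pdivlMr // mulrC.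
Qed.

Lemma claimC (t : R) : 0 <= t <= mu -> phi 0 * expR (- (t / mu)) <= phi t.
Proof.
move=> /andP[t0 tm].
have m0 := mu_gt0; have m1 := mu_lt1.
set B := phi 0.
have B0 : 0 < B := B_gt0.
have [->|tp] := eqVneq t 0; first by rewrite mul0r oppr0 expR0 mulr1.
have tpos : 0 < t by rewrite lt_def tp t0.
have pt : 0 < phi t by apply: phi_gt0; rewrite t0 (le_lt_trans tm).
have pm : 0 < phi mu by apply: phi_gt0; rewrite ltW // m1.
set L := kh t / phi t.
have h1 := tan t 0 ltac:(lra) ltac:(lra).
have h2 := tan t mu ltac:(lra) ltac:(lra).
rewrite -/L mulr0 expR0 mulr1 -/B in h1.
rewrite -/L in h2.
have hA := claimA; rewrite -/B in hA.
pose u := ln (phi t) - ln B.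
pose v := ln (phi mu) - ln B.
have lnE : forall x y : R, 0 < x -> ln (x * expR y) = ln x + y.
  by move=> x y x0; rewrite lnM ?posrE ?expR_gt0 // expRK.
have e1 : 0 <= u + L * t.
  have := h1; rewrite -ler_ln ?posrE ?mulr_gt0 ?expR_gt0 // lnE // /u; lra.
have e2 : v + L * mu <= u + L * t.
  have := h2; rewrite -ler_ln ?posrE ?mulr_gt0 ?expR_gt0 // !lnE // /u /v; lra.
have e3 : -1 <= v.
  have := hA; rewrite -ler_ln ?posrE ?mulr_gt0 ?expR_gt0 // lnE // /v; lra.
have e4 : t * v <= mu * u.
  have p1 : t * (v + L * mu) <= t * (u + L * t) by rewrite ler_wpM2l // ltW.
  have p2 : 0 <= (mu - t) * (u + L * t) by rewrite mulr_ge0 // subr_ge0.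
  nra.
have e5 : - (t / mu) <= u.
  rewrite -(@ler_pM2l _ mu) // mulrN mulrCA divff ?gt_eqF // mulr1.
  nra.
have : expR (- (t / mu)) <= phi t / B.
  by rewrite -[phi t / B]lnK ?posrE ?divr_gt0 // ler_expR ln_div ?posrE.
by rewrite ler_pdivlMr // mulrC.
Qed.

Definition gg (x : R) := Num.min mu x * kh x / phi 0.

Lemma ggc : continuous gg.
Proof.
move=> x.
have -> : gg = ((cst mu \min id) \* kh) \* cst ((phi 0)^-1) by [].
apply: continuousM; last exact: cst_continuous.
apply: continuousM; last exact: khc.
apply: continuous_min; first exact: cst_continuous.
exact: der_cont (is_derive_id x 1).
Qed.

Lemma final : mu * (1 - expR (-1)) <= Prim gg 1 - Prim gg 0.
Proof.
have m0 := mu_gt0; have m1 := mu_lt1.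
set B := phi 0.
have B0 : 0 < B := B_gt0.
pose D1 := Prim gg + B^-1 \*: (id * phi) + mu \*: (fun v => expR ((- mu^-1) * v + 0)).
pose D2 := Prim gg + (mu / B) \*: phi.
have D1d : forall x, 0 < x < mu -> is_derive x 1 D1 (phi x / B - expR ((- mu^-1) * x + 0)).
  move=> x /andP[x0 xm].
  have x1 : -1 < x by lra.
  have h := is_deriveD (is_deriveD (Prim_derive gg x ggc x1)
     (is_deriveZ B^-1 (is_deriveM (is_derive_id x 1) (phi_derive x x1))))
     (is_deriveZ mu (expl_derive (- mu^-1) 0 x)).
  apply: (is_derive_eq h); rewrite /GRing.scale/= /gg /B min_r ?ltW //.
  by field; rewrite !gt_eqF.
have D2d : forall x, mu < x < 1 -> is_derive x 1 D2 0.
  move=> x /andP[xm x1'].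
  have x1 : -1 < x by lra.
  have h := is_deriveD (Prim_derive gg x ggc x1) (is_deriveZ (mu / B) (phi_derive x x1)).
  apply: (is_derive_eq h); rewrite /GRing.scale/= /gg /B min_l ?ltW //.
  by field; rewrite gt_eqF.
have s1 : D1 0 <= D1 mu.
  have c1 : forall x, 0 <= x <= mu -> {for x, continuous D1}.
    move=> x /andP[x0 _].
    have x1 : -1 < x by lra.
    have h := is_deriveD (is_deriveD (Prim_derive gg x ggc x1)
     (is_deriveZ B^-1 (is_deriveM (is_derive_id x 1) (phi_derive x x1))))
     (is_deriveZ mu (expl_derive (- mu^-1) 0 x)).
    exact: der_cont h.
  have p1 : forall x, 0 < x < mu -> 0 <= phi x / B - expR ((- mu^-1) * x + 0).
    move=> x /andP[x0 xm].
    rewrite subr_ge0 ler_pdivlMr // mulrC addr0 mulNr -mulrC.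
    have xi : 0 <= x <= mu by rewrite ltW ?x0 ?xm // ltW. have := claimC x xi. by rewrite -/B mulrC [x / mu]mulrC.
  exact: (@mono R D1 (fun x => phi x / B - expR ((- mu^-1) * x + 0)) 0 mu (ltW m0) D1d c1 p1).
have s2 : D2 mu <= D2 1.
  have c2 : forall x, mu <= x <= 1 -> {for x, continuous D2}.
    move=> x /andP[x0 _].
    have x1 : -1 < x by lra.
    have h := is_deriveD (Prim_derive gg x ggc x1) (is_deriveZ (mu / B) (phi_derive x x1)).
    exact: der_cont h.
  have p2 : forall x, mu < x < 1 -> 0 <= (fun=> 0 : R) x by [].
  exact: (@mono R D2 (fun=> 0) mu 1 (ltW m1) D2d c2 p2).
have s1' : Prim gg 0 + B^-1 * (0 * phi 0) + mu * expR (- mu^-1 * 0 + 0) <=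
  Prim gg mu + B^-1 * (mu * phi mu) + mu * expR (- mu^-1 * mu + 0) := s1.
have s2' : Prim gg mu + (mu / B) * phi mu <= Prim gg 1 + (mu / B) * phi 1 := s2.
have E1 : - mu^-1 * mu + 0 = -1 by rewrite addr0 mulNr mulVf ?gt_eqF.
have E0 : - mu^-1 * 0 + 0 = 0 by rewrite mulr0 addr0.
rewrite E1 E0 expR0 phi1 in s1' s2'.
have e : mu / B * phi mu = B^-1 * (mu * phi mu) by ring.
have e2 : B^-1 * (0 * phi 0) = 0 by rewrite mul0r mulr0.
have e3 : mu / B * 0 = 0 by rewrite mulr0.
lra.
Qed.

End Main.

Theorem lemma1 (R : realType) (alpha beta : R) (ha : 1 <= alpha) (hb : 1 <= beta) :
  let mu := alpha / (alpha + beta) in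
  ((mu * (1 - expR (-1)))%:E <= beta_expect alpha beta (fun x => Num.min mu x))%E.
Proof.
change ((mu alpha beta * (1 - expR (-1)))%:E <=
  beta_expect alpha beta (fun x => Num.min (mu alpha beta) x))%E.
have Bc : beta_const alpha beta = phi alpha beta 0.
  rewrite /beta_const.
  have -> : (\int[lebesgue_measure]_(x in `[0%R, 1%R]) beta_kernel alpha beta x)%R =
     (\int[lebesgue_measure]_(x in `[0%R, 1%R]) kh alpha beta x)%R.
    apply: eq_Rintegral => x; rewrite inE/= in_itv/= => xi.
    by rewrite kh_E.
  rewrite /Rintegral ftc01; [by [] | exact: khc].
have -> : beta_expect alpha beta (fun x => Num.min (mu alpha beta) x) =
  (\int[lebesgue_measure]_(x in `[0%R, 1%R]) (gg alpha beta x)%:E)%E.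
  rewrite /beta_expect; apply: eq_integral => x; rewrite inE/= in_itv/= => xi.
  by rewrite /beta_density Bc /gg /beta_kernel -kh_E // mulrA.
rewrite ftc01; last exact: ggc.
rewrite lee_fin.
exact: final.
Qed.
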